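(* Let $\mathcal{T}$ be a trie and let $p$ and $q$ be palindromes occurring in $\mathcal{T}$ (i.e. $p,q\in\mathsf{Substr}(\mathcal{T})$) such that $p$ is a proper prefix of $q$. If the locus of $p$ in $\mathsf{STree}(\mathcal{T})$ is an implicit node on an edge $(u,v)$ (with $v$ the child endpoint) and the character following it on that edge is $c$, then the locus of $q$ is an implicit node on some edge in the subtree of $\mathsf{STree}(\mathcal{T})$ rooted at $v$, and the character following it on its edge is also $c$.
   Context: A trie $\mathcal{T}$ is a rooted tree in which each edge is labeled by a single character and the out-going edges of each node have mutually distinct labels. Path labels are read leaf-to-root: for $\mathbf{u}$ a descendant of $\mathbf{v}$, $\mathsf{str}(\mathbf{u},\mathbf{v})$ is the string of edge labels on the path from $\mathbf{u}$ up to $\mathbf{v}$, and $\mathsf{Substr}(\mathcal{T})$ is the set of all such strings. By convention the root $\mathbf{r}$ of $\mathcal{T}$ has a single child, reached by an edge labeled by a special character $\$$ occurring nowhere else in $\mathcal{T}$. For each node $\mathbf{v}$ let $\mathsf{suf}(\mathbf{v})=\mathsf{str}(\mathbf{v},\mathbf{r})$. The suffix tree $\mathsf{STree}(\mathcal{T})$ is the compacted trie (edges labeled by non-empty strings, out-going edge labels of each node beginning with distinct characters, every internal node other than the root having at least two children) whose leaves are in one-to-one correspondence with the non-root nodes $\mathbf{v}$ of $\mathcal{T}$, the leaf for $\mathbf{v}$ spelling $\mathsf{suf}(\mathbf{v})$ from the root. The locus of a string $w\in\mathsf{Substr}(\mathcal{T})$ is the end point of the path spelling $w$ from the root of $\mathsf{STree}(\mathcal{T})$;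 it is an explicit node if it is a node of $\mathsf{STree}(\mathcal{T})$ and an implicit node if it lies strictly inside an edge. A palindrome is a string equal to its reversal. *)

(* Defs.v *)
From mathcomp Require Import all_boot.
Set Implicit Arguments. Unset Strict Implicit. Unset Printing Implicit Defensive.

(* A trie is given by a finite node type [T], a root [r], a parent map [par]
   ([par v] is the parent of [v <> r]) and [lab v] = label of the edge
   from [v] up to [par v] (meaningless for [v = r]).  [dol] is the special
   character $. *)
Section Trie.
Variables (A : eqType) (T : finType) (r : T) (par : T -> T) (lab : T -> A)
          (dol : A).

Definition is_trie : Prop :=
  [/\ par r = r,
      (forall v, exists k, iter k par v = r),
      (forall u v, u != r -> v != r -> par u = par v -> lab u = lab v -> u = v),
      ((exists u, u != r /\ par u = r) /\
       (forall u v, u != r -> v != r -> par u = r -> par v = r -> u = v))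
    &
      (forall u, u != r -> (lab u == dol) = (par u == r))].

(* [is_str w u v]: [u] is a descendant of [v] and [w = str(u,v)], the labels
   read on the path from [u] up to [v]. *)
Definition is_str (w : seq A) (u v : T) : Prop :=
  iter (size w) par u = v /\
  (forall i, i < size w -> iter i par u != r) /\
  w = [seq lab (iter i par u) | i <- iota 0 (size w)].

Definition in_substr (w : seq A) : Prop := exists u v, is_str w u v.

(* w = suf(v) for some non-root node v (leaves of STree) *)
Definition is_suf (w : seq A) : Prop := exists v, v != r /\ is_str w v r.

(* w spells a path (explicit or implicit node) from the root of STree *)
Definition in_stree (w : seq A) : Prop :=
  exists s, is_suf s /\ prefix w s.

(* The locus of w is an explicit node of STree: the root, a leaf, or a
   branching internal node. *)
Definition explicit (w : seq A) : Prop :=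
  in_stree w /\
  [\/ w = [::], is_suf w |
      exists a b, [/\ a != b, in_stree (rcons w a) & in_stree (rcons w b)]].

(* The locus of w is an implicit node and the character following it on
   its edge is c. *)
Definition implicit_next (w : seq A) (c : A) : Prop :=
  [/\ in_stree w, ~ explicit w & in_stree (rcons w c)].

(* [sv] is (the string of) the child endpoint v of the edge (u,v) of STree
   on which the locus of w lies. *)
Definition edge_child (w sv : seq A) : Prop :=
  [/\ explicit sv, prefix w sv, w != sv &
      forall x, prefix w x -> prefix x sv -> x != sv -> ~ explicit x].

Definition palindrome (w : seq A) : Prop := rev w = w.

End Trie.

(* Main.v *)
Require Import Defs.
From mathcomp Require Import all_boot.
From mathcomp Require Import zify.
From Stdlib Require Import Lia.
Set Implicit Arguments. Unset Strict Implicit. Unset Printing Implicit Defensive.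

Lemma prefix_cmp (B : eqType) (u v : seq B) :
  prefix u v \/ prefix v u -> size u <= size v -> prefix u v.
Proof.
case => // /prefixP [t ->]; rewrite size_cat => H.
move: H; rewrite -{2}[size v]addn0 leq_add2l leqn0 size_eq0 => /eqP ->.
by rewrite cats0 prefix_refl.
Qed.

Section Aux.
Variables (A : eqType) (T : finType) (r : T) (par : T -> T) (lab : T -> A).

Lemma suf_drop (x y : seq A) : y != [::] -> is_suf r par lab (x ++ y) -> is_suf r par lab y.
Proof.
move=> yn [v [vr [H1 [H2 H3]]]].
exists (iter (size x) par v); split; last split; [| | split].
- have Hy : 0 < size y by rewrite lt0n size_eq0.
  apply: H2. by rewrite size_cat -{1}[size x]addn0 ltn_add2l.
- by rewrite -iterD addnC -size_cat.
- move=> i Hi. rewrite -iterD. apply: H2. by rewrite size_cat addnC ltn_add2l.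
- move: H3. rewrite size_cat iotaD map_cat => /eqP.
  rewrite eqseq_cat ?size_map ?size_iota // => /andP[_ /eqP ->].
  rewrite add0n -[size x]addn0 iotaDl addn0 -map_comp. rewrite size_map size_iota; apply: eq_map => i /=.
  by rewrite addnC iterD.
Qed.

Lemma stree_drop x y : y != [::] -> in_stree r par lab (x ++ y) -> in_stree r par lab y.
Proof.
move=> yn [s [Hs /prefixP [t Ht]]].
exists (y ++ t); split; last exact: prefix_prefix.
apply: (@suf_drop x); first by case: y yn {Ht}.
by rewrite catA -Ht.
Qed.

Lemma stree_prefix w w' : prefix w w' -> in_stree r par lab w' -> in_stree r par lab w.
Proof. move=> H [s [Hs H']]; exists s; split => //; exact: prefix_trans H H'. Qed.

Lemma substr_stree w : (forall v, exists k, iter k par v = r) -> w != [::] ->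
  in_substr r par lab w -> in_stree r par lab w.
Proof.
move=> Hroot wn [u [v [H1 [H2 H3]]]].
have ex : exists k, iter k par u == r by case: (Hroot u) => k Hk; exists k; apply/eqP.
case: (ex_minnP ex) => k /eqP Hk Hmin.
have Hkw : size w <= k.
  rewrite leqNgt; apply/negP => Hlt. by move: (H2 _ Hlt); rewrite Hk eqxx.
exists [seq lab (iter i par u) | i <- iota 0 k]; split.
- exists u; split.
  + have Hy : 0 < size w by rewrite lt0n size_eq0.
    by have := H2 0 Hy.
  + split; first by rewrite size_map size_iota.
    split; last by rewrite size_map size_iota.
    move=> i; rewrite size_map size_iota => Hi. apply/negP => /eqP Hi'.
    have := Hmin i. rewrite Hi' eqxx => /(_ isT). by rewrite leqNgt Hi.
- rewrite H3 -(subnKC Hkw) iotaD map_cat. apply: prefix_prefix.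
Qed.
End Aux.

Theorem lemma3 (A : eqType) (T : finType) (r : T) (par : T -> T)
  (lab : T -> A) (dol : A) :
  is_trie r par lab dol ->
  forall (p q : seq A),
    palindrome p -> palindrome q ->
    in_substr r par lab p -> in_substr r par lab q ->
    prefix p q -> p != q ->
    forall (c : A) (sv : seq A),
      implicit_next r par lab p c ->
      edge_child r par lab p sv ->
      (* the locus of q is implicit, lies in the subtree rooted at v
         (i.e. str(v) is a prefix of q), and is followed by c *)
      implicit_next r par lab q c /\ prefix sv q.
Proof.
move=> [Hpr Hroot Hinj [Hc1 Hc2] Hdol] p q Pp Pq Sp Sq Hpq npq c sv
  [Ip nEp Ipc] [Esv Hpsv npsv Hbetween].
have pn : p != [::].
  apply/eqP => p0; apply: nEp; split => //; by constructor 1.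
move/prefixP: (Hpq) => [z Hz].
have qn : q != [::] by rewrite Hz; case: p pn {Pp Sp Ip nEp Ipc Hpsv npsv Hbetween Hpq npq Hz}.
have Iq := substr_stree Hroot qn Sq.
have [x Hx] : exists x, q = x ++ p.
  exists (rev z). by rewrite -Pq Hz rev_cat Pp.
have Hext : forall a, in_stree r par lab (rcons p a) -> a = c.
  move=> a Ha; apply/eqP; apply/negPn/negP => ne; apply: nEp; split => //.
  constructor 3; exists a, c; split => //.
have rn : forall (s : seq A) a, rcons s a != [::] by move=> s a; case: s.
have nEq : ~ explicit r par lab q.
  move=> [_ [q0|Sq'|[a [b [ab Ha Hb]]]]].
  - by move: qn; rewrite q0.
  - apply: nEp; split => //; constructor 2; apply: (@suf_drop _ _ _ _ _ x) => //.
    by rewrite -Hx.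
  - move: Ha Hb; rewrite Hx !rcons_cat => /(stree_drop (rn _ _)) /Hext Ha
      /(stree_drop (rn _ _)) /Hext Hb.
    by move: ab; rewrite Ha Hb eqxx.
have L : forall z, in_stree r par lab (p ++ z) -> prefix (p ++ z) sv \/ prefix sv (p ++ z).
  elim/last_ind => [|z0 a IH] H; first by left; rewrite cats0.
  have H' : in_stree r par lab (p ++ z0).
    by apply: stree_prefix H; rewrite -rcons_cat prefix_rcons.
  case: (IH H') => [Hl | Hr]; last first.
    by right; apply: prefix_trans Hr _; rewrite -rcons_cat prefix_rcons.
  case: (boolP (p ++ z0 == sv)) => [/eqP e | ne].
    by right; rewrite -e -rcons_cat prefix_rcons.
  have nE := Hbetween (p ++ z0) (prefix_prefix _ _) Hl ne.
  move/prefixP: Hl => [t Ht]. case: t Ht => [|b t] Ht.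
    by rewrite cats0 in Ht; rewrite Ht eqxx in ne.
  have Isv : in_stree r par lab sv by case: Esv.
  have Hb : in_stree r par lab (rcons (p ++ z0) b).
    apply: stree_prefix Isv; apply/prefixP; exists t; by rewrite Ht -cats1 -!catA.
  have ab : a = b.
    apply/eqP; apply/negPn/negP => nab; apply: nE; split => //; constructor 3.
    exists a, b; split => //. by rewrite rcons_cat.
  left. rewrite -rcons_cat ab; apply/prefixP; exists t; by rewrite Ht -cats1 -!catA.
split; first split => //.
- move: (Iq) => [s [Hs /prefixP [t Ht]]].
  case: t Ht => [|a t] Ht.
    by exfalso; apply: nEq; split => //; constructor 2; rewrite Ht cats0 in Hs.
  have Ia : in_stree r par lab (rcons q a).
    exists s; split => //; apply/prefixP; exists t; by rewrite Ht -cats1 -!catA.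
  have := Ia; rewrite Hx rcons_cat => /(stree_drop (rn _ _)) /Hext Ha.
  by rewrite -Ha -Hx.
- case: (L z); first by rewrite -Hz.
    2: by rewrite -Hz.
  rewrite -Hz => Hqsv.
  exfalso.
  case: (boolP (q == sv)) => [/eqP e | ne]; first by apply: nEq; rewrite e.
  have sx : 0 < size x.
    rewrite lt0n size_eq0; apply/negP => /eqP x0; move: npq; by rewrite Hx x0 eqxx.
  move/prefixP: Hqsv => [w Hw].
  have Hsv : sv = x ++ (p ++ w) by rewrite Hw Hx catA.
  move: Esv => [Isv [sv0 | Ssv | [a [b [ab Ha Hb]]]]].
  - by move: Hpsv pn; rewrite sv0 prefixs0 => ->.
  - have Spw : is_suf r par lab (p ++ w).
      apply: (@suf_drop _ _ _ _ _ x); last by rewrite -Hsv.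
      by rewrite -size_eq0 size_cat addn_eq0 size_eq0 negb_and pn.
    have Ipw : in_stree r par lab (p ++ w) by exists (p ++ w); split => //; exact: prefix_refl.
    have Hsz : size (p ++ w) < size sv by rewrite Hsv (size_cat x) -{1}[size (p ++ w)]add0n ltn_add2r.
    have Hpre : prefix (p ++ w) sv by apply: prefix_cmp (L w Ipw) (ltnW Hsz).
    apply: (Hbetween (p ++ w) (prefix_prefix _ _) Hpre).
    + by apply/negP => /eqP e; move: Hsz; rewrite e ltnn.
    + split => //; by constructor 2.
  - have key : forall d, in_stree r par lab (rcons sv d) -> prefix (rcons (p ++ w) d) sv.
      move=> d Hd.
      have Id : in_stree r par lab (p ++ rcons w d).
        have nn : p ++ rcons w d != [::] by rewrite -rcons_cat rn.
        by move: Hd; rewrite Hsv !rcons_cat; apply: stree_drop.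
      rewrite rcons_cat; apply: prefix_cmp (L _ Id) _.
      rewrite Hsv !size_cat size_rcons. move: sx; clear; lia.
    move: (key a Ha) (key b Hb); rewrite !prefixE !size_rcons => /eqP Ea /eqP Eb.
    have E : rcons (p ++ w) a = rcons (p ++ w) b by rewrite -Ea -Eb.
    move/(congr1 (last a)): E; rewrite !last_rcons => E.
    by rewrite E eqxx in ab.
Qed.
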